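(* Let $r\ge1$ and $n\ge1$ be integers, let $A\subset\{0,1\}^n$ have density $\alpha$ inside $\{0,1\}^n$ and let $B\subset\{0,\dots,r\}^n$ have density $\beta$ inside $\{0,\dots,r\}^n$. Then the sumset $A+B=\{a+b:a\in A,b\in B\}$ (addition in $\mathbb{Z}^n$) has density at least $\alpha\beta$ inside $\{0,\dots,r+1\}^n$.
   Context: The density of a subset $X$ of a finite set $Y$ inside $Y$ is $|X|/|Y|$. *)

(* Defs.v *)
From mathcomp Require Import all_boot all_order all_algebra.
Set Implicit Arguments. Unset Strict Implicit. Unset Printing Implicit Defensive.
Import GRing.Theory Num.Theory.

(* Points of {0,1}^n are finite functions 'I_n -> bool (bool coerces to 0/1 in nat);
   points of {0,...,m-1}^n are finite functions 'I_n -> 'I_m. *)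

(* Every sum a+b with a in {0,1}^n, b in {0,..,r}^n lies in {0,..,r+1}^n, so this is
   exactly the set {a+b : a in A, b in B}. *)
Definition sumset (n r : nat) (A : {set {ffun 'I_n -> bool}})
  (B : {set {ffun 'I_n -> 'I_r.+1}}) : {set {ffun 'I_n -> 'I_r.+2}} :=
  [set c : {ffun 'I_n -> 'I_r.+2} | [exists a in A, exists b in B, [forall i, (c i : nat) == (a i : nat) + b i]]].

Definition density (T : finType) (X : {set T}) : rat := (#|X|%:R / #|T|%:R)%R.

(* Main.v *)
Require Import Defs.
From mathcomp Require Import all_boot all_order all_algebra.
From mathcomp Require Import zify ring.
Import GRing.Theory Num.Theory.
Set Implicit Arguments. Unset Strict Implicit.

Definition fcons (T : finType) n (t : T) (y : {ffun 'I_n -> T}) : {ffun 'I_n.+1 -> T} :=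
  [ffun i => if unlift ord0 i is Some j then y j else t].
Definition ftl (T : finType) n (x : {ffun 'I_n.+1 -> T}) : {ffun 'I_n -> T} :=
  [ffun j => x (lift ord0 j)].
Definition slice (T : finType) n (X : {set {ffun 'I_n.+1 -> T}}) (t : T) : {set {ffun 'I_n -> T}} :=
  [set y | fcons t y \in X].

Lemma fcons0 (T : finType) n t (y : {ffun 'I_n -> T}) : fcons t y ord0 = t.
Proof. by rewrite ffunE unlift_none. Qed.
Lemma fconsS (T : finType) n t (y : {ffun 'I_n -> T}) j : fcons t y (lift ord0 j) = y j.
Proof. by rewrite ffunE liftK. Qed.

Lemma card_slices (T : finType) n (X : {set {ffun 'I_n.+1 -> T}}) :
  #|X| = \sum_(t : T) #|slice X t|.
Proof.
rewrite -sum1_card.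
rewrite (reindex (fun p : T * {ffun 'I_n -> T} => fcons p.1 p.2)) /=; last first.
  apply: onW_bij; exists (fun x : {ffun _ -> T} => (x ord0, ftl x)).
    by case=> t y /=; rewrite fcons0; congr pair; apply/ffunP=> j; rewrite ffunE fconsS.
  move=> x /=; apply/ffunP=> i; rewrite ffunE; case: unliftP => [j ->|->] //.
  by rewrite ffunE.
under [RHS]eq_bigr do rewrite -sum1_card.
rewrite pair_big_dep /=; apply: eq_bigl => -[t y] /=; by rewrite inE.
Qed.

Lemma sumset_slice n r (A : {set {ffun 'I_n.+1 -> bool}}) (B : {set {ffun 'I_n.+1 -> 'I_r.+1}})
  (i : bool) (j : 'I_r.+1) (k : 'I_r.+2) :
  (k : nat) = i + j -> sumset (slice A i) (slice B j) \subset slice (sumset A B) k.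
Proof.
move=> Hk; apply/subsetP => y; rewrite !inE => /existsP [a /andP[Ha /existsP[b /andP[Hb /forallP H]]]].
rewrite inE in Ha; rewrite inE in Hb.
apply/existsP; exists (fcons i a); rewrite Ha /=; apply/existsP; exists (fcons j b); rewrite Hb /=.
apply/forallP => l; case: (unliftP ord0 l) => [l' ->|->].
  by rewrite !fconsS; exact: H.
by rewrite !fcons0 Hk.
Qed.

Lemma base r (A : {set {ffun 'I_0 -> bool}}) (B : {set {ffun 'I_0 -> 'I_r.+1}}) :
  #|A| * #|B| <= #|sumset A B|.
Proof.
have c1 (T : finType) (X : {set {ffun 'I_0 -> T}}) : #|X| <= 1.
  by apply: leq_trans (max_card _) _; rewrite card_ffun card_ord expn0.
case: (set_0Vmem A) => [->|[a Ha]]; first by rewrite cards0.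
case: (set_0Vmem B) => [->|[b Hb]]; first by rewrite cards0 muln0.
have : [ffun i : 'I_0 => (ord0 : 'I_r.+2)] \in sumset A B.
  rewrite inE; apply/existsP; exists a; rewrite Ha /=; apply/existsP; exists b; rewrite Hb /=.
  by apply/forallP => -[].
move=> Hc; have HC : 0 < #|sumset A B| by apply/card_gt0P; exists [ffun i : 'I_0 => (ord0 : 'I_r.+2)].
by apply: leq_trans HC; exact: (leq_mul (c1 _ A) (c1 _ B)).
Qed.

Lemma split_sum R m (c : nat -> nat) :
  \sum_(j < R) (j <= m) * c j + \sum_(j < R) (m <= j) * c j.+1 <= \sum_(k < R.+1) c k.
Proof.
have -> : \sum_(k < R.+1) c k = \sum_(k < R.+1) (k <= m) * c k + \sum_(k < R.+1) (m < k) * c k.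
  rewrite -big_split /=; apply: eq_bigr => k _; rewrite -mulnDl.
  by case: leqP => _; rewrite mul1n.
apply: leq_add.
  by rewrite big_ord_recr /= leq_addr.
rewrite big_ord_recl /= add0n; apply: eq_leq; apply: eq_bigr => j _.
by rewrite /bump leq0n add1n ltnS.
Qed.

Lemma amgm x y : 2 * (x * y) <= x * x + y * y.
Proof.
case: (leqP x y) => h.
  have [d ->] : exists d, y = x + d by exists (y - x); lia.
  nia.
have [d ->] : exists d, x = y + d by exists (x - y); lia.
nia.
Qed.

Lemma cs R (b : nat -> nat) :
  2 * ((\sum_(j < R) b j) * (\sum_(j < R) b j)) <= 2 * (R * \sum_(j < R) b j * b j).
Proof.
have -> : (\sum_(j < R) b j) * (\sum_(j < R) b j) = \sum_(i < R) \sum_(j < R) b i * b j.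
  by rewrite big_distrl /=; apply: eq_bigr => i _; rewrite big_distrr.
set Q := \sum_(j < R) b j * b j.
have E1 : \sum_(i < R) \sum_(j < R) (b i * b i + b j * b j) = \sum_(i < R) (R * (b i * b i) + Q).
  by apply: eq_bigr => i _; rewrite big_split /= sum_nat_const card_ord.
have E2 : \sum_(i < R) (R * (b i * b i) + Q) = 2 * (R * Q).
  rewrite big_split /= -big_distrr /= sum_nat_const card_ord -/Q; lia.
rewrite -E2 -E1.
rewrite big_distrr /=; apply: leq_sum => i _; rewrite big_distrr /=; apply: leq_sum => j _.
exact: amgm.
Qed.

Section K.
Variables (R : nat) (b : nat -> nat).
Definition PP m := \sum_(j < R) (j <= m) * b j.
Definition QQ m := \sum_(j < R) (m <= j) * b j.

Lemma XY : \sum_(m < R) b m * PP m = \sum_(m < R) b m * QQ m.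
Proof.
rewrite /PP /QQ.
under eq_bigr do rewrite big_distrr.
under [RHS]eq_bigr do rewrite big_distrr.
rewrite exchange_big /=; apply: eq_bigr => i _; apply: eq_bigr => j _; lia.
Qed.

Lemma PQ (m : 'I_R) : PP m + QQ m = \sum_(j < R) b j + b m.
Proof.
rewrite /PP /QQ -big_split /=.
rewrite (eq_bigr (fun j : 'I_R => b j + (nat_of_ord j == nat_of_ord m) * b j)); last first.
  move=> j _; case: (ltngtP j m) => //= h; lia.
rewrite big_split /=; congr (_ + _).
rewrite (bigD1 m) //= eqxx mul1n big1 ?addn0 // => j /negbTE.
by rewrite -val_eqE /= => ->.
Qed.

Lemma XpY : \sum_(m < R) b m * PP m + \sum_(m < R) b m * QQ m =
  (\sum_(j < R) b j) * (\sum_(j < R) b j) + \sum_(j < R) b j * b j.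
Proof.
rewrite -big_split /=.
under eq_bigr do rewrite -mulnDr PQ mulnDr.
by rewrite big_split /= big_distrl /=; congr (_ + _); apply: eq_bigr => i _; rewrite mulnC.
Qed.
End K.

Lemma key R (b s0 s1 c : nat -> nat) (a0 a1 C D E : nat) :
  (forall j, j < R -> D * a0 * b j <= E * s0 j) ->
  (forall j, j < R -> D * a1 * b j <= E * s1 j) ->
  (forall j, j < R -> s0 j <= c j) ->
  (forall j, j < R -> s1 j <= c j.+1) ->
  C = \sum_(k < R.+1) c k ->
  (a0 + a1) * (\sum_(j < R) b j) * (R.+1 * D) <= C * (2 * R * E).
Proof.
move=> H0 H1 Hs0 Hs1 HC.
have K1 : forall m, D * (a0 * PP R b m + a1 * QQ R b m) <= E * C.
  move=> m; rewrite HC; apply: leq_trans (leq_mul (leqnn E) (split_sum R m c)).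
  rewrite !mulnDr /PP /QQ !big_distrr /=; apply: leq_add; apply: leq_sum => j _.
    have := H0 j (ltn_ord j); have := leq_mul (leqnn E) (Hs0 j (ltn_ord j)).
    case: (j <= m) => /=; nia.
  have := H1 j (ltn_ord j); have := leq_mul (leqnn E) (Hs1 j (ltn_ord j)).
  case: (m <= j) => /=; nia.
set S := \sum_(j < R) b j.
set X := \sum_(m < R) b m * PP R b m.
have K2 : D * (a0 + a1) * X <= S * (E * C).
  have -> : S * (E * C) = \sum_(m < R) b m * (E * C) by rewrite /S big_distrl.
  have -> : D * (a0 + a1) * X = \sum_(m < R) b m * (D * (a0 * PP R b m + a1 * QQ R b m)).
    rewrite /X mulnDr mulnDl {2}XY !big_distrr -big_split /=; apply: eq_bigr => i _; nia.
  by apply: leq_sum => i _; rewrite leq_mul2l K1 orbT.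
have K3 := XpY R b; rewrite -XY -/X -/S in K3.
have K4 := cs R b; rewrite -/S in K4.
set Qs := \sum_(j < R) b j * b j in K3 K4.
case: (posnP S) => [->|Sp]; first by rewrite muln0 mul0n.
rewrite -(leq_pmul2l Sp).
have K4' : S * S <= R * Qs by lia.
set F := D * (a0 + a1) in K2 *.
apply: (@leq_trans (F * (R * (S * S) + R * Qs))).
  have -> : S * ((a0 + a1) * S * (R.+1 * D)) = F * (R * (S * S) + S * S) by rewrite /F; ring.
  by rewrite leq_mul2l leq_add2l K4' orbT.
have -> : S * (C * (2 * R * E)) = (2 * R) * (S * (E * C)) by ring.
apply: (@leq_trans ((2 * R) * (F * X))); last by rewrite leq_mul2l K2 orbT.
have -> : 2 * R * (F * X) = F * (R * (X + X)) by ring.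
by rewrite K3 !mulnDr.

Qed.

Lemma mainN r n : forall (A : {set {ffun 'I_n -> bool}}) (B : {set {ffun 'I_n -> 'I_r.+1}}),
  #|A| * #|B| * (r.+2)^n <= #|sumset A B| * (2^n * (r.+1)^n).
Proof.
elim: n => [|n IH] A B.
  by rewrite !expn0 !muln1; exact: base.
have eA : #|A| = #|slice A false| + #|slice A true|.
  by rewrite card_slices big_bool addnC.
have eB : #|B| = \sum_(j < r.+1) #|slice B (inord j)|.
  by rewrite card_slices; apply: eq_bigr => j _; rewrite inord_val.
have eC : #|sumset A B| = \sum_(k < r.+2) #|slice (sumset A B) (inord k)|.
  by rewrite card_slices; apply: eq_bigr => j _; rewrite inord_val.
have := @key r.+1 (fun j => #|slice B (inord j)|)
  (fun j => #|sumset (slice A false) (slice B (inord j))|)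
  (fun j => #|sumset (slice A true) (slice B (inord j))|)
  (fun k => #|slice (sumset A B) (inord k)|)
  #|slice A false| #|slice A true| #|sumset A B| (r.+2 ^ n) (2 ^ n * r.+1 ^ n).
have Hs : forall (i : bool) j, j < r.+1 -> j + i < r.+2 ->
   #|sumset (slice A i) (slice B (inord j))| <= #|slice (sumset A B) (inord (j + i))|.
  move=> i j hj hj2; apply: subset_leq_card; apply: sumset_slice.
  by rewrite !inordK // addnC.
rewrite -eA -eB -eC.
move=> /(_ _ _ _ _ erefl).
have H := fun i j => IH (slice A i) (slice B (inord j)).
move=> K; rewrite !expnS.
have -> : 2 * 2 ^ n * (r.+1 * r.+1 ^ n) = 2 * r.+1 * (2 ^ n * r.+1 ^ n) by ring.
apply: K.
- by move=> j _; have := H false j; by rewrite [X in X <= _]mulnC [X in _ <= X]mulnC !mulnA.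
- by move=> j _; have := H true j; by rewrite [X in X <= _]mulnC [X in _ <= X]mulnC !mulnA.
- by move=> j hj; have := Hs false j hj; rewrite addn0; apply; lia.
- by move=> j hj; have := Hs true j hj; rewrite addn1; apply; lia.
Qed.

Theorem proposition3p1 (r n : nat) (hr : (1 <= r)%N) (hn : (1 <= n)%N)
  (A : {set {ffun 'I_n -> bool}}) (B : {set {ffun 'I_n -> 'I_r.+1}}) :
  (density A * density B <= density (sumset A B))%R.
Proof.
rewrite /density !card_ffun !card_ord card_bool mulf_div.
rewrite ler_pdivrMr ?ltr0n ?muln_gt0 ?expn_gt0 //.
rewrite mulrAC ler_pdivlMr ?ltr0n ?expn_gt0 //.
rewrite -!natrM ler_nat.
  exact: mainN.
by rewrite -natrM ltr0n muln_gt0 !expn_gt0.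
Qed.
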